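(* Let $q$ be an indeterminate and work in the algebra of formal series in the noncommuting indeterminates $S_0,S_1,S_2,\dots$ over $\mathbb{C}(q)$, graded by $\deg S_k=k$. Define $g_n$ ($n\ge 0$) by $g_0=S_0$ and, for $n\ge1$, $$(q^n-1)\,g_n=\sum_{k=1}^{n} S_k\sum_{\substack{j_1+\cdots+j_{k+1}=n-k\\ j_i\ge 0}} g_{j_1}g_{j_2}\cdots g_{j_{k+1}},$$ and set $g=\sum_{n\ge0}g_n$. Then $$g=\sum_{T} m_T(q)\, S^{I(T)},\qquad m_T(q)=\prod_{v}\frac{1}{q^{\phi(v)-1}-1},$$ where $T$ runs over all reduced plane trees (including the tree consisting of a single leaf), $I(T)$ is the Polish code of $T$, the product runs over the internal vertices $v$ of $T$, and $\phi(v)$ is the number of leaves of the subtree of $T$ rooted at $v$. More precisely, for each $n\ge 0$, $g_n$ is the sum of $m_T(q)S^{I(T)}$ over the reduced plane trees $T$ with $n+1$ leaves.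
   Context: A reduced plane tree (Schröder tree) is a rooted plane (ordered) tree in which every internal vertex has at least two children; vertices without children are leaves. The Polish code $I(T)=(i_1,\dots,i_m)$ of $T$ is the sequence obtained by listing the vertices in preorder (root first, then the subtrees of the children from left to right, recursively) and recording $0$ for a leaf and $k$ for an internal vertex with $k+1$ children. For a sequence $I=(i_1,\dots,i_m)$ of nonnegative integers, $S^I=S_{i_1}S_{i_2}\cdots S_{i_m}$. The empty product $m_T(q)$ for the single-leaf tree equals $1$. *)

(* Defs.v *)
From HB Require Import structures.
From mathcomp Require Import all_boot all_order all_algebra all_field.
From mathcomp Require Import fraction algC.
Set Implicit Arguments. Unset Strict Implicit. Unset Printing Implicit Defensive.
Import Order.TTheory GRing.Theory Num.Theory.
Local Open Scope ring_scope.

(** Coefficient field C(q): the field of fractions of polynomials over the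
    algebraic complex numbers, with q the indeterminate. *)
Definition K : fieldType := {fraction {poly algC}}.
Definition qv : K := @FracField.tofrac {poly algC} 'X.

(** Formal series in the noncommuting indeterminates S_0, S_1, ...:
    a series assigns a coefficient to every word (seq nat) in the S_k. *)
Definition series := seq nat -> K.

Definition addS (a b : series) : series := fun w => a w + b w.
Definition oneS : series := fun w => (w == [::])%:R.
Definition mulS (a b : series) : series :=
  fun w => \sum_(i < (size w).+1) a (take i w) * b (drop i w).
Definition Svar (k : nat) : series := fun w => (w == [:: k])%:R.
Definition Smon (I : seq nat) : series := fun w => (w == I)%:R.
Definition prodS (l : seq series) : series := foldr mulS oneS l.

Definition rhs (g : nat -> series) (n : nat) : series :=
  fun w => \sum_(1 <= k < n.+1)
    mulS (Svar k)
      (fun w' => \sum_(j : {ffun 'I_k.+1 -> 'I_(n - k).+1}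
                        | (\sum_(i < k.+1) (j i : nat))%N == (n - k)%N)
                   prodS [seq g (nat_of_ord (j i)) | i <- enum 'I_k.+1] w') w.

Inductive ptree := PNode of seq ptree.

Fixpoint enc (t : ptree) : GenTree.tree nat :=
  let: PNode s := t in GenTree.Node 0 (map enc s).
Fixpoint dec (g : GenTree.tree nat) : ptree :=
  match g with
  | GenTree.Leaf _ => PNode [::]
  | GenTree.Node _ s => PNode (map dec s)
  end.
Lemma encK : cancel enc dec.
Proof.
rewrite /cancel; fix IH 1 => -[s] /=; congr PNode.
elim: s => [|t s IHs] //=; by rewrite IH IHs.
Qed.
HB.instance Definition _ := Countable.copy ptree (can_type encK).

Fixpoint leaves (t : ptree) : nat :=
  let: PNode s := t in if s is [::] then 1%N else sumn (map leaves s).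

Fixpoint reduced (t : ptree) : bool :=
  let: PNode s := t in (size s != 1%N) && all reduced s.

(** Polish code: preorder, 0 for a leaf, k for a vertex with k+1 children *)
Fixpoint code (t : ptree) : seq nat :=
  let: PNode s := t in (size s).-1 :: flatten (map code s).

Fixpoint mT (t : ptree) : K :=
  let: PNode s := t in
  (if s is [::] then 1 else (qv ^+ (leaves (PNode s)).-1 - 1)^-1)
    * \prod_(x <- map mT s) x.

(* Main.v *)
Require Import Defs.
From HB Require Import structures.
From mathcomp Require Import all_boot all_order all_algebra all_field.
From mathcomp Require Import fraction algC.
From Stdlib Require Import FunctionalExtensionality.
From mathcomp Require Import zify ring.
Set Implicit Arguments. Unset Strict Implicit. Unset Printing Implicit Defensive.
Import GRing.Theory.
Local Open Scope ring_scope.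

Lemma qv_neq0 n : (0 < n)%N -> qv ^+ n - 1 != 0.
Proof.
move=> hn; rewrite /qv -(rmorph1 (@FracField.tofrac {poly algC})) -rmorphXn -rmorphB.
rewrite -(rmorph0 (@FracField.tofrac {poly algC})) tofrac_eq.
have := monicXnsubC (1 : algC) hn; rewrite polyC1 => /monic_neq0 //.
Qed.

Lemma ptree_ind' (P : ptree -> Prop) :
  (forall s, (forall x, x \in s -> P x) -> P (PNode s)) -> forall t, P t.
Proof.
move=> H; fix IH 1 => -[s]; apply: H.
elim: s => [|x s IHs] y; first by rewrite in_nil => F; discriminate F.
rewrite in_cons => /orP[/eqP->|]; [exact: IH|exact: IHs].
Qed.

Lemma leaves_pos t : (0 < leaves t)%N.
Proof.
elim/ptree_ind': t => -[|x s] IH //=.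
have := IH x (mem_head _ _); lia.
Qed.

Lemma sumn_leaves_ge (c : seq ptree) : (size c <= sumn (map leaves c))%N.
Proof. elim: c => //= x c IH; have := leaves_pos x; lia. Qed.

Lemma leaves_PNode c : c != [::] -> leaves (PNode c) = sumn (map leaves c).
Proof. by case: c. Qed.

Lemma mulS_Smon u v : mulS (Smon u) (Smon v) = Smon (u ++ v).
Proof.
apply: functional_extensionality => w; rewrite /mulS /Smon.
have [->|neq] := eqVneq w (u ++ v).
  have hu : (size u < (size (u ++ v)).+1)%N by rewrite size_cat; lia.
  rewrite (bigD1 (Ordinal hu)) //= take_size_cat // drop_size_cat // !eqxx mulr1.
  rewrite big1 ?addr0 // => i /eqP hi.
  have [ht|] := eqVneq (take i (u ++ v)) u; last by rewrite mul0r.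
  exfalso; apply: hi; apply: val_inj => /=.
  have := congr1 size ht; rewrite size_take; have := ltn_ord i.
  move=> h1; case: ltnP => h2 h4 //.
  by apply/eqP; rewrite -h4 eqn_leq h2 -ltnS h1.
rewrite big1 // => i _.
have [ht|] := eqVneq (take i w) u; last by rewrite mul0r.
have [hd|] := eqVneq (drop i w) v; last by rewrite mulr0.
by move: neq; rewrite -ht -hd cat_take_drop eqxx.
Qed.

Lemma mulS_lc (I J : Type) (r : seq I) (r' : seq J) a b u v :
  mulS (fun w => \sum_(x <- r) a x * Smon (u x) w)
       (fun w => \sum_(y <- r') b y * Smon (v y) w) =
  fun w => \sum_(x <- r) \sum_(y <- r') (a x * b y) * Smon (u x ++ v y) w.
Proof.
apply: functional_extensionality => w; rewrite /mulS.
transitivity (\sum_(i < (size w).+1) \sum_(x <- r) \sum_(y <- r')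
   (a x * b y) * (Smon (u x) (take i w) * Smon (v y) (drop i w))).
  apply: eq_bigr => i _; rewrite mulr_suml; apply: eq_bigr => x _.
  rewrite mulr_sumr; apply: eq_bigr => y _; by rewrite mulrACA.
rewrite exchange_big; apply: eq_bigr => x _; rewrite exchange_big.
apply: eq_bigr => y _; rewrite -mulr_sumr; congr (_ * _).
by rewrite -(mulS_Smon (u x) (v y)).
Qed.

Lemma mulS_Svar k f :
  mulS (Svar k) f = fun w => if w is a :: w' then (a == k)%:R * f w' else 0.
Proof.
apply: functional_extensionality => -[|a w]; rewrite /mulS /Svar.
  by rewrite big_ord1 /= mulr0n mul0r.
rewrite big_ord_recl /= mulr0n mul0r add0r big_ord_recl /= take0 drop0.
rewrite big1 ?addr0; last first.
  move=> i _; rewrite /bump /=.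
  case: w i => [|b w] i; first by case: i.
  by rewrite add0n add1n /= eqseq_cons /= andbF mulr0n mul0r.
by rewrite eqseq_cons andbT.
Qed.

Fixpoint cprod (L : seq (seq ptree)) : seq (seq ptree) :=
  if L is l :: L' then [seq t :: c | t <- l, c <- cprod L'] else [:: [::]].

Definition inrel (t : ptree) (l : seq ptree) := t \in l.

Lemma mem_cprod L c : (c \in cprod L) = all2 inrel c L.
Proof.
elim: L c => [|l L IH] [|t c] //=.
- by apply/allpairsP => -[[x y] /= [_ _]].
- apply/allpairsP/andP => [[[x y] /= [hx hy [-> ->]]]|[hx hy]].
    by rewrite -IH.
  by exists (t, c); rewrite /= IH.
Qed.

Lemma uniq_cprod L : all uniq L -> uniq (cprod L).
Proof.
elim: L => [|l L IH] //= /andP[ul uL]; apply: allpairs_uniq => //; first exact: IH.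
by move=> [x y] [x' y'] _ _ /= [-> ->].
Qed.

Lemma all2_size (T U : Type) (r : T -> U -> bool) c d : all2 r c d -> size c = size d.
Proof. by elim: c d => [|x c IH] [|y d] //= /andP[_ /IH ->]. Qed.

Lemma all2_nth (T U : Type) (r : T -> U -> bool) x0 y0 c d :
  size c = size d -> (forall i, (i < size c)%N -> r (nth x0 c i) (nth y0 d i)) ->
  all2 r c d.
Proof.
elim: c d => [|x c IH] [|y d] //= [hs] h; apply/andP; split; first exact: (h 0%N).
by apply: IH => // i hi; apply: (h i.+1).
Qed.

Lemma all2_all (P : pred ptree) c L :
  all2 inrel c L -> (forall l t, l \in L -> t \in l -> P t) -> all P c.
Proof.
elim: c L => [|x c IH] [|l L] //= /andP[hx hc] h; apply/andP; split.
  by apply: (h l) => //; rewrite mem_head.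
by apply: (IH L hc) => l' t hl'; apply: h; rewrite in_cons hl' orbT.
Qed.

Definition Gl (l : seq ptree) : series := fun w => \sum_(t <- l) mT t * Smon (code t) w.

Lemma prodS_G L :
  prodS [seq Gl l | l <- L] =
  fun w => \sum_(c <- cprod L) (\prod_(x <- map mT c) x) * Smon (flatten (map code c)) w.
Proof.
elim: L => [|l L IH] /=.
  apply: functional_extensionality => w.
  by rewrite big_seq1 big_nil mul1r.
rewrite IH /Gl mulS_lc; apply: functional_extensionality => w.
rewrite big_allpairs_dep; apply: eq_bigr => t _; apply: eq_bigr => c _.
by rewrite big_cons.
Qed.

Definition Good (g : nat -> series) (n : nat) (s : seq ptree) :=
  [/\ uniq s, (forall t, (t \in s) = reduced t && (leaves t == n.+1)) &
      forall w, g n w = \sum_(t <- s) mT t * Smon (code t) w].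

Definition Lk (S : nat -> seq ptree) (n k : nat) (j : {ffun 'I_k.+1 -> 'I_(n - k).+1}) :=
  [seq S (nat_of_ord (j i)) | i <- enum 'I_k.+1].
Definition Jk (n k : nat) := filter (fun j : {ffun 'I_k.+1 -> 'I_(n - k).+1} =>
   (\sum_(i < k.+1) (j i : nat))%N == (n - k)%N) (index_enum {ffun 'I_k.+1 -> 'I_(n - k).+1}).
Definition D (S : nat -> seq ptree) n :=
  flatten [seq flatten [seq cprod (Lk S j) | j <- Jk n k] | k <- iota 1 n].

Lemma size_cL S n k (j : {ffun 'I_k.+1 -> 'I_(n - k).+1}) c :
  c \in cprod (Lk S j) -> size c = k.+1.
Proof. by rewrite mem_cprod => /all2_size ->; rewrite size_map size_enum_ord. Qed.

Lemma leaves_cL S n (hS : forall m, (m < n)%N -> forall t, t \in S m -> leaves t = m.+1)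
  k (hk1 : (1 <= k)%N) (hkn : (k <= n)%N) (j : {ffun 'I_k.+1 -> 'I_(n - k).+1}) c :
  c \in cprod (Lk S j) -> map leaves c = [seq (j i : nat).+1 | i <- enum 'I_k.+1].
Proof.
rewrite mem_cprod /Lk; elim: (enum 'I_k.+1) c => [|i r IH] [|t c] //= /andP[ht hc].
rewrite (IH _ hc) (hS _ _ t ht) //.
have := ltn_ord (j i); lia.
Qed.

Lemma sum_leaves n k (hkn : (k <= n)%N) (j : {ffun 'I_k.+1 -> 'I_(n - k).+1}) :
  (\sum_(i < k.+1) (j i : nat))%N = (n - k)%N ->
  sumn [seq (j i : nat).+1 | i <- enum 'I_k.+1] = n.+1.
Proof.
move=> hs; rewrite sumnE big_map big_enum /=.
rewrite (eq_bigl xpredT) //; under eq_bigr do rewrite -addn1.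
rewrite big_split /= hs sum_nat_const card_ord muln1; lia.
Qed.

Lemma uniq_flatten_map (I T : eqType) (f : I -> seq T) s :
  uniq s -> (forall x, x \in s -> uniq (f x)) ->
  (forall x y z, x \in s -> y \in s -> z \in f x -> z \in f y -> x = y) ->
  uniq (flatten (map f s)).
Proof.
elim: s => [|x s IH] //= /andP[xs us] hu hd; rewrite cat_uniq hu ?mem_head //=.
rewrite IH //; last first.
  by move=> a b z ha hb; apply: hd; rewrite in_cons ?ha ?hb orbT.
  by move=> a ha; apply: hu; rewrite in_cons ha orbT.
rewrite andbT; apply/hasPn => z /flatten_mapP[y ys zy]; apply/negP => zx.
have exy : x = y by apply: (hd x y z) => //; rewrite ?mem_head // in_cons ys orbT.
by move: xs; rewrite exy ys.
Qed.

Lemma bnd_help (n k x : nat) : (0 < k)%N -> (x < (n - k).+1)%N -> (k < 1 + n)%N -> (x < n)%N.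
Proof. lia. Qed.
Lemma bnd_help2 (n k : nat) : (k < 1 + n)%N -> (k <= n)%N.
Proof. lia. Qed.

Lemma uniq_D S n (hS : forall m, (m < n)%N -> forall t, t \in S m -> leaves t = m.+1)
  (hU : forall m, (m < n)%N -> uniq (S m)) : uniq (D S n).
Proof.
apply: uniq_flatten_map; first exact: iota_uniq.
- move=> k; rewrite mem_iota => /andP[hk1 hkn]; apply: uniq_flatten_map.
  + exact/filter_uniq/index_enum_uniq.
  + move=> j _; apply: uniq_cprod; apply/allP => l /mapP[i _ ->]; apply: hU.
    exact: (bnd_help hk1 (ltn_ord (j i)) hkn).
  + move=> j1 j2 c _ _ h1 h2.
    have hkn' := bnd_help2 hkn.
    have := leaves_cL hS hk1 hkn' h1; rewrite (leaves_cL hS hk1 hkn' h2).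
    move/esym/eq_in_map => he; apply/ffunP => i; apply: val_inj.
    by have := he i (mem_enum _ i) => -[].
- move=> k1 k2 c _ _ /flatten_mapP[j1 _ h1] /flatten_mapP[j2 _ h2].
  by have := size_cL h1; rewrite (size_cL h2) => -[].
Qed.

Lemma core g (hrec : forall n, (0 < n)%N -> forall w, (qv ^+ n - 1) * g n w = rhs g n w)
  N (hN : (0 < N)%N) S (hS : forall m, (m < N)%N -> Good g m (S m)) :
  Good g N (map PNode (D S N)).
Proof.
have hmem m : (m < N)%N -> forall t, (t \in S m) = reduced t && (leaves t == m.+1).
  by move=> hm; case: (hS m hm).
have hL m : (m < N)%N -> forall t, t \in S m -> leaves t = m.+1.
  by move=> hm t; rewrite hmem // => /andP[_ /eqP].
have hU m : (m < N)%N -> uniq (S m) by move=> hm; case: (hS m hm).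
have hG m : (m < N)%N -> g m = Gl (S m).
  by move=> hm; case: (hS m hm) => _ _ h; apply: functional_extensionality.
have hcL k (hk1 : (1 <= k)%N) (hkn : (k <= N)%N) (j : {ffun 'I_k.+1 -> 'I_(N - k).+1}) c :
    j \in Jk N k -> c \in cprod (Lk S j) -> size c = k.+1 /\ sumn (map leaves c) = N.+1.
  move=> hj hc; split; first exact: size_cL hc.
  rewrite (leaves_cL hL hk1 hkn hc); apply: sum_leaves => //.
  by move: hj; rewrite mem_filter => /andP[/eqP].
split.
- by rewrite map_inj_uniq ?uniq_D // => a b [].
- move=> t; apply/idP/idP.
    move=> /mapP[c /flatten_mapP[k hk /flatten_mapP[j hj hc]] ->].
    move: hk; rewrite mem_iota => /andP[hk1 hkn].
    have {hkn} hkn : (k <= N)%N by apply: bnd_help2.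
    have [hsz hlv] := hcL k hk1 hkn j c hj hc.
    rewrite leaves_PNode -?size_eq0 ?hsz // hlv eqxx andbT /= hsz.
    apply/andP; split; first by case: (k) hk1.
    move: hc; rewrite mem_cprod => hc; apply: (all2_all hc) => l u /mapP[i _ ->].
    rewrite hmem; first by case/andP.
    exact: (bnd_help hk1 (ltn_ord (j i))).
  case: t => c /andP[hred hl]; move: hred => /= /andP[hs1 hallr].
  have hc0 : c != [::] by case: (c) hl => //=; rewrite eqSS => /eqP h; move: hN; rewrite -h.
  move: hl; rewrite leaves_PNode // => /eqP hl.
  set k := (size c).-1.
  have hsz : size c = k.+1 by rewrite /k prednK // lt0n size_eq0.
  have hk1 : (0 < k)%N by move: hs1; rewrite hsz; case: (k).
  pose l (i : 'I_k.+1) := leaves (nth (PNode [::]) c i).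
  have hsl : (\sum_(i < k.+1) l i = N.+1)%N.
    by rewrite -hl sumnE big_map (big_nth (PNode [::])) hsz big_mkord.
  have hsl2 : (\sum_(i < k.+1) l i = \sum_(i < k.+1) (l i).-1 + k.+1)%N.
    rewrite (eq_bigr (fun i => (l i).-1 + 1)%N); last first.
      by move=> i _; rewrite addn1 prednK // leaves_pos.
    by rewrite big_split /= sum_nat_const card_ord muln1.
  have hkn : (k <= N)%N by move: hsl2; rewrite hsl; lia.
  have hsum : (\sum_(i < k.+1) (l i).-1 = N - k)%N by move: hsl2; rewrite hsl; lia.
  have hb i : ((l i).-1 < (N - k).+1)%N.
    by rewrite ltnS -hsum (bigD1 i) //= leq_addr.
  pose j : {ffun 'I_k.+1 -> 'I_(N - k).+1} := [ffun i => inord (l i).-1].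
  have hj i : (j i : nat) = (l i).-1 by rewrite ffunE inordK.
  apply/mapP; exists c => //; apply/flatten_mapP; exists k.
    rewrite mem_iota hk1 /=; lia.
  apply/flatten_mapP; exists j.
    rewrite mem_filter mem_index_enum andbT; apply/eqP.
    by rewrite (eq_bigr _ (fun i _ => hj i)) hsum.
  rewrite mem_cprod; apply: (@all2_nth _ _ _ (PNode [::]) [::]).
    by rewrite size_map size_enum_ord hsz.
  move=> i hi; have hi' : (i < k.+1)%N by rewrite -hsz.
  rewrite /inrel (nth_map ord0) ?size_enum_ord //.
  have -> : nth ord0 (enum 'I_k.+1) i = Ordinal hi' by apply: val_inj; rewrite /= nth_enum_ord.
  rewrite hmem; last first.
    apply: (bnd_help hk1 (ltn_ord (j _))); lia.
  rewrite (allP hallr) ?mem_nth //= hj /l /= prednK ?leaves_pos //.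
move=> w; apply: (mulfI (qv_neq0 hN)); rewrite hrec //.
rewrite big_map /D big_flatten big_map mulr_sumr /rhs /index_iota subSS subn0.
rewrite big_seq [RHS]big_seq; apply: eq_bigr => k; rewrite mem_iota => /andP[hk1 hkn].
have {hkn} hkn : (k <= N)%N by apply: bnd_help2.
rewrite big_flatten big_map mulS_Svar.
case: w => [|a w].
  rewrite big1 ?mulr0 // => j _; rewrite big1 // => c _.
  by rewrite /Smon /= mulr0n mulr0.
rewrite [LHS]mulr_sumr -[LHS]big_filter -/(Jk N k) mulr_sumr.
rewrite big_seq [RHS]big_seq; apply: eq_bigr => j hj.
rewrite (_ : [seq g (nat_of_ord (j i)) | i <- enum 'I_k.+1] = [seq Gl l | l <- Lk S j]);
  last first.
  rewrite /Lk -map_comp; apply: eq_map => i /=; apply: hG.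
  exact: (bnd_help hk1 (ltn_ord (j i))).
rewrite prodS_G !mulr_sumr; rewrite big_seq [RHS]big_seq; apply: eq_bigr => c hc.
have [hsz hlv] := hcL k hk1 hkn j c hj hc.
have hmT : mT (PNode c) = (qv ^+ N - 1)^-1 * \prod_(x <- map mT c) x.
  case: c hsz hlv {hc} => // t c _ hl.
  by move: hl => /= ->.
rewrite hmT /code -/code hsz /= /Smon eqseq_cons -mulnb natrM.
by rewrite !mulrA mulfV ?qv_neq0 // mul1r [_ * \prod_(_ <- _) _]mulrC.
Qed.

Theorem mainTheorem1 (g : nat -> series) :
  g 0%N = Svar 0 ->
  (forall n, (0 < n)%N -> forall w, (qv ^+ n - 1) * g n w = rhs g n w) ->
  forall n : nat, exists s : seq ptree,
    [/\ uniq s,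
        (forall t, (t \in s) = reduced t && (leaves t == n.+1)) &
        forall w, g n w = \sum_(t <- s) mT t * Smon (code t) w].
Proof.
move=> h0 hrec.
have H : forall n, exists S : nat -> seq ptree, forall m, (m <= n)%N -> Good g m (S m).
  elim=> [|n IHn].
    exists (fun _ => [:: PNode [::]]) => m; rewrite leqn0 => /eqP ->.
    split => //.
      move=> [c]; rewrite in_cons in_nil orbF; apply/eqP/andP.
        by move=> [->].
      case: c => // t c [/andP[hr _] /eqP hl]; exfalso.
      have h1 := sumn_leaves_ge (t :: c); move: h1 hl hr => /= h1 hl hr.
      have h3 : size c != 0%N by exact: hr.
      move: h3; rewrite size_eq0 => h3; lia.
    move=> w; rewrite h0 big_seq1 /= big_nil !mul1r //.
  have [Sf hS] := IHn.
  exists (fun m => if (m <= n)%N then Sf m else map PNode (D Sf n.+1)) => m hm.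
  case: ifP => hmn; first exact: hS.
  have -> : m = n.+1 by apply/eqP; rewrite eqn_leq hm ltnNge hmn.
  apply: core => // m' hm'; rewrite ifT //.
move=> n; have [Sf hS] := H n; exists (Sf n).
by case: (hS n (leqnn n)).
Qed.
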